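(* Let $P$ be a poset and $X$ an antichain of $P$. The following are equivalent: (i) $X$ is the minimum of $AM(P)$; (ii) $X$ is a minimal element of $AM(P)$; (iii) $P=\uparrow X$.
   Context: $AM(P)$ is the set of maximal antichains of $P$ ordered by domination: $Y\leq Z$ iff for every $y\in Y$ there is $z\in Z$ with $y\leq z$. $\uparrow X=\{y\in P: x\leq y\text{ for some }x\in X\}$. *)

(* Defs.v *)
From mathcomp Require Import all_boot all_order.
Set Implicit Arguments. Unset Strict Implicit. Unset Printing Implicit Defensive.
Import Order.TTheory.
Local Open Scope order_scope.

Section Defs.
Context {d : Order.disp_t} {T : porderType d}.

Definition antichain (X : T -> Prop) : Prop :=
  forall x y, X x -> X y -> x <= y -> x = y.

Definition max_antichain (X : T -> Prop) : Prop :=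
  antichain X /\
  forall Y : T -> Prop, antichain Y -> (forall x, X x -> Y x) ->
    (forall x, Y x -> X x).

(* Domination order on AM(P): Y <= Z iff every y in Y lies below some z in Z. *)
Definition dominated (Y Z : T -> Prop) : Prop :=
  forall y, Y y -> exists z, Z z /\ y <= z.

Definition upset (X : T -> Prop) : T -> Prop :=
  fun y => exists x, X x /\ x <= y.

Definition AM_minimum (X : T -> Prop) : Prop :=
  max_antichain X /\ forall Y, max_antichain Y -> dominated X Y.

Definition AM_minimal (X : T -> Prop) : Prop :=
  max_antichain X /\
  forall Y, max_antichain Y -> dominated Y X -> (forall x, Y x <-> X x).

End Defs.

(* Main.v *)
Require Import Defs.
From mathcomp Require Import all_boot all_order.
From mathcomp Require Import boolp classical_sets.
From Stdlib Require Import Classical.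
Set Implicit Arguments. Unset Strict Implicit. Unset Printing Implicit Defensive.
Import Order.TTheory.
Local Open Scope order_scope.

Lemma extend_ac (d : Order.disp_t) (T : porderType d) (Z : T -> Prop) :
  antichain Z -> exists Y, max_antichain Y /\ (forall z, Z z -> Y z).
Proof.
move=> acZ.
pose P := fun A : T -> Prop => antichain (fun t => Z t \/ A t).
have [|A [PA Amax]] := @Zorn_bigcup T P.
  move=> F FP Ftot x y.
  move=> [Zx|[X FX Xx]] [Zy|[Y FY Yy]].
  - exact: acZ.
  - by apply: (FP _ FY); [left|right].
  - by apply: (FP _ FX); [right|left].
  - have [XY|YX] := Ftot _ _ FX FY.
      by apply: (FP _ FY); right => //; apply: XY.
    by apply: (FP _ FX); right => //; apply: YX.
exists (fun t => Z t \/ A t); split; last by move=> z; left.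
split => // Y acY sub x Yx.
apply: NNPP => nx.
apply: (Amax Y).
  split; first by move=> t At; apply: sub; right.
  move=> YA; apply: nx; right; exact: YA.
move=> s t [Zs|Ys] [Zt|Yt]; apply: acY => //; apply: sub; by left.
Qed.

Theorem lemma5p1 (d : Order.disp_t) (T : porderType d) (X : T -> Prop) :
  antichain X ->
  (AM_minimum X <-> AM_minimal X) /\
  (AM_minimal X <-> (forall p : T, upset X p)).
Proof.
move=> acX.
have iii_i : (forall p : T, upset X p) -> AM_minimum X.
  move=> up.
  have mX : max_antichain X.
    split => // Y acY sub y Yy.
    have [x [Xx xy]] := up y.
    by rewrite -(acY _ _ (sub _ Xx) Yy xy).
  split => // Y [acY mY] x Xx.
  apply: NNPP => nex.
  have nc : forall y, Y y -> ~ (x <= y) /\ ~ (y <= x).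
    move=> y Yy; split => [xy|yx]; first by apply: nex; exists y.
    have [x' [Xx' x'y]] := up y.
    have ex : x' = x by apply: acX => //; apply: le_trans yx.
    subst x'; apply: nex; exists y; split => //.
  have Yx : Y x.
    apply: (mY (fun t => Y t \/ t = x)).
    - move=> s t [Ys|->] [Yt|->] st //.
      + by apply: acY.
      + by case: (nc _ Ys) => _ /(_ st).
      + by case: (nc _ Yt) => /(_ st).
    - by move=> t Yt; left.
    - by right.
  by apply: nex; exists x; split.
have i_ii : AM_minimum X -> AM_minimal X.
  move=> [mX dX]; split => // Y mY dYX.
  have dXY := dX Y mY.
  have [acY _] := mY.
  move=> t; split => [Yt|Xt].
  - have [x [Xx tx]] := dYX t Yt.
    have [y [Yy xy]] := dXY x Xx.
    have ety : t = y by apply: acY => //; apply: le_trans xy.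
    subst y; suff -> : t = x by [].
    by apply: le_anti; rewrite tx xy.
  - have [y [Yy ty]] := dXY t Xt.
    have [x [Xx yx]] := dYX y Yy.
    have etx : t = x by apply: acX => //; apply: le_trans yx.
    subst x; suff -> : t = y by [].
    by apply: le_anti; rewrite ty yx.
have ii_iii : AM_minimal X -> (forall p : T, upset X p).
  move=> [[_ mX] minX] p.
  apply: NNPP => np.
  pose Z := fun t => t = p \/ (X t /\ ~ (p <= t)).
  have acZ : antichain Z.
    move=> s t [Es|[Xs nps]] [Et|[Xt npt]] st.
    - by rewrite Es Et.
    - by case: npt; rewrite -Es.
    - by case: np; exists s; rewrite -Et.
    - by apply: acX.
  have [Y [[acY mY] ZY]] := extend_ac acZ.
  have dYX : dominated Y X.
    move=> y Yy.
    apply: NNPP => nd.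
    have Xy : X y.
      apply: (mX (fun t => X t \/ t = y)).
      - move=> s t [Xs|->] [Xt|->] st //.
        + by apply: acX.
        + case: (classic (p <= s)) => ps.
            have := acY _ _ (ZY _ (or_introl erefl)) Yy (le_trans ps st).
            by move=> ey; case: np; exists s; rewrite ey.
          have Ys : Y s by apply: ZY; right.
          by apply: acY.
        + by case: nd; exists t.
      - by move=> t Xt; left.
      - by right.
    by apply: nd; exists y; split.
  have := (minX Y (conj acY mY) dYX p).1 (ZY _ (or_introl erefl)).
  by move=> Xp; apply: np; exists p.
split; split.
- exact: i_ii.
- by move=> H; apply: iii_i; apply: ii_iii.
- exact: ii_iii.
- by move=> H; apply: i_ii; apply: iii_i.
Qed.
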